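(* If $M$ is a probabilistic epistemic structure over $\Phi$ and $M_c$ is the corresponding common-interpretation structure over $\Phi\times N$, then for every formula $\varphi$, state $\omega$ and player $i$: (a) $(M,\omega,i)\models^{\mathit{in}}\varphi$ iff $(M_c,\omega)\models\varphi_i^{\mathit{in}}$; (b) $(M,\omega,i)\models^{\mathit{out}}\varphi$ iff $(M_c,\omega)\models\varphi_i^{\mathit{out}}$.
   Context: Setting: $N=\{1,\dots,n\}$ players; formulas are built from primitive propositions by negation, conjunction, operators $CB_G$ ($G\subseteq N$ nonempty) and probability formulas $a_1\Pr_j(\varphi_1)+\dots+a_k\Pr_j(\varphi_k)\ge b$ ($a_l,b\in\mathbb{Q}$); $B_j\varphi$ abbreviates $\Pr_j(\varphi)=1$, $EB^1_G\varphi=\bigwedge_{j\in G}B_j\varphi$, $EB^{m+1}_G\varphi=EB^m_GEB^1_G\varphi$. An epistemic probability structure $M=(\Omega,(\Pi_j)_{j\in N},(\mathcal{P}_j)_{j\in N},(\pi_j)_{j\in N})$ over $\Phi$ has partitions $\Pi_i$ of $\Omega$, probability spaces $\mathcal{P}_i(\omega)=(\Omega_{i,\omega},\mathcal{F}_{i,\omega},\mu_{i,\omega})$, and player-specific truth assignments $\pi_i(\omega)$ to $\Phi$, satisfying: $\Omega_{i,\omega}=\Pi_i(\omega)$; $\mathcal{P}_i$ constant on cells of $\Pi_i$; $\Pi_i(\omega)\cap\Pi_j(\omega')\in\mathcal{F}_{i,\omega}$; and $\Pi_i(\omega)\cap[[p]]_i\in\mathcal{F}_{i,\omega}$. Outermost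 scope: $(M,\omega,i)\models^{\mathit{out}}p$ iff $\pi_i(\omega)(p)=\mathbf{true}$; negation/conjunction as usual; $(M,\omega,i)\models^{\mathit{out}}\sum_la_l\Pr_j(\varphi_l)\ge b$ iff $\sum_la_l\mu_{j,\omega}([[\varphi_l]]^{\mathit{out}}_i\cap\Omega_{j,\omega})\ge b$ with $[[\psi]]^{\mathit{out}}_i=\{\omega:(M,\omega,i)\models^{\mathit{out}}\psi\}$; $CB_G\varphi$ holds iff $EB^k_G\varphi$ holds for all $k\ge1$. Innermost scope $\models^{\mathit{in}}$ is the same except that probability formulas about $j$ use $[[\varphi_l]]^{\mathit{in}}_j$. The corresponding common-interpretation structure is $M_c=(\Omega,(\Pi_j),(\mathcal{P}_j),\pi)$ over primitive propositions $\Phi\times N$, with $\pi(\omega)((p,i))=\pi_i(\omega)(p)$; truth in $M_c$ is agent-independent: $(M_c,\omega)\models(p,i)$ iff $\pi(\omega)((p,i))=\mathbf{true}$, and $(M_c,\omega)\models\sum_la_l\Pr_j(\varphi_l)\ge b$ iff $\sum_la_l\mu_{j,\omega}([[\varphi_l]]\cap\Omega_{j,\omega})\ge b$. Translations, defined by induction: $p_i^{\mathit{in}}=(p,i)$; $(\neg\psi)_i^{\mathit{in}}=\neg\psi_i^{\mathit{in}}$; $(\psi\wedge\psi')_i^{\mathit{in}}=\psi_i^{\mathit{in}}\wedge\psi'^{\mathit{in}}_i$; $(\sum_la_l\Pr_j(\varphi_l)\ge b)_i^{\mathit{in}}=\sum_la_l\Pr_j((\varphi_l)_j^{\mathit{in}})\ge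 b$; $(CB_G\psi)_i^{\mathit{in}}=CB_G(\bigwedge_{j\in G}B_j\psi_j^{\mathit{in}})$. Similarly $p_i^{\mathit{out}}=(p,i)$; negation and conjunction componentwise; $(\sum_la_l\Pr_j(\varphi_l)\ge b)_i^{\mathit{out}}=\sum_la_l\Pr_j((\varphi_l)_i^{\mathit{out}})\ge b$; $(CB_G\psi)_i^{\mathit{out}}=CB_G(\psi_i^{\mathit{out}})$. *)

(* Defs.v *)
From HB Require Import structures.
From mathcomp Require Import all_boot all_order all_algebra.
From mathcomp Require Import boolp classical_sets reals topology normedtype sequences.
Set Implicit Arguments. Unset Strict Implicit. Unset Printing Implicit Defensive.
Import Order.TTheory GRing.Theory Num.Theory numFieldNormedType.Exports.
Local Open Scope classical_set_scope.
Local Open Scope ring_scope.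

(* PrLin j [:: (a_1,phi_1); ...; (a_k,phi_k)] b  is                     *)
(*   a_1 Pr_j(phi_1) + ... + a_k Pr_j(phi_k) >= b.                     *)
Inductive formula (n : nat) (P : Type) : Type :=
| Prim of P
| Neg of formula n P
| And of formula n P & formula n P
| PrLin of 'I_n & seq (rat * formula n P) & rat
| CB of {set 'I_n} & formula n P.

Arguments Prim {n P}.
Arguments Neg {n P}.
Arguments And {n P}.
Arguments PrLin {n P}.
Arguments CB {n P}.

Fixpoint wf n P (phi : formula n P) : Prop :=
  match phi with
  | Prim _ => True
  | Neg psi => wf psi
  | And psi chi => wf psi /\ wf chi
  | PrLin _ ts _ => foldr (fun t acc => wf t.2 /\ acc) True ts
  | CB G psi => (0 < #|G|)%N /\ wf psi
  end.

(* Abbreviations: B_j phi := Pr_j(phi) = 1, i.e. Pr_j(phi) >= 1 /\ -Pr_j(phi) >= -1. *)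
Definition Bf n P (j : 'I_n) (phi : formula n P) : formula n P :=
  And (PrLin j [:: (1%R, phi)] 1%R) (PrLin j [:: ((-1)%R, phi)] (-1)%R).

Definition ftrue n P (phi : formula n P) : formula n P := Neg (And phi (Neg phi)).

(* finite conjunction of a list of formulas (d only used for the empty list) *)
Fixpoint bigconj n P (d : formula n P) (l : seq (formula n P)) : formula n P :=
  match l with
  | [::] => ftrue d
  | [:: x] => x
  | x :: l' => And x (bigconj d l')
  end.

(* cell i w   = Pi_i(w)  (= Omega_{i,w}, the sample space)             *)
(* sfield i w = F_{i,w},  prob i w = mu_{i,w}                           *)
Record pframe (R : realType) (n : nat) (Omega : Type) := PFrame {
  cell : 'I_n -> Omega -> set Omega;
  sfield : 'I_n -> Omega -> set (set Omega);
  prob : 'I_n -> Omega -> set Omega -> R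
}.

Section Structures.
Variables (R : realType) (n : nat) (Omega : Type).

Definition is_sigma_algebra_on (D : set Omega) (F : set (set Omega)) : Prop :=
  [/\ (forall A, F A -> A `<=` D),
      F D,
      (forall A, F A -> F (D `\` A)) &
      (forall A : nat -> set Omega, (forall k, F (A k)) -> F (\bigcup_k A k))].

Definition is_probability_on (D : set Omega) (F : set (set Omega))
    (mu : set Omega -> R) : Prop :=
  [/\ (forall A, F A -> 0 <= mu A),
      mu D = 1 &
      (forall A : nat -> set Omega, (forall k, F (A k)) -> trivIset setT A ->
         (fun m => \sum_(k < m) mu (A k)) @ \oo --> mu (\bigcup_k A k))].

Record is_epist_struct (Phi : Type) (M : pframe R n Omega)
    (pi : 'I_n -> Omega -> Phi -> bool) : Prop := {
  (* Pi_i is a partition of Omega; Pi_i(w) is the cell containing w *)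
  es_cell_refl : forall i w, cell M i w w;
  es_cell_eq : forall i w w', cell M i w w' -> cell M i w' = cell M i w;
  es_sigma : forall i w, is_sigma_algebra_on (cell M i w) (sfield M i w);
  es_prob : forall i w, is_probability_on (cell M i w) (sfield M i w) (prob M i w);
  es_const : forall i w w', cell M i w w' ->
     sfield M i w' = sfield M i w /\ prob M i w' = prob M i w;
  es_meas_cell : forall i j w w', sfield M i w (cell M i w `&` cell M j w');
  es_meas_prim : forall i w p, sfield M i w (cell M i w `&` [set v | pi i v p])
}.

Definition lin_sem (M : pframe R n Omega) (j : 'I_n) (w : Omega)
    (ts : seq (rat * set Omega)) (b : rat) : Prop :=
  ratr b <= \sum_(t <- ts) ratr t.1 * prob M j w (t.2 `&` cell M j w).

Definition B_sem (M : pframe R n Omega) (j : 'I_n) (A : set Omega) : set Omega :=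
  [set w | lin_sem M j w [:: (1%R, A)] 1%R /\ lin_sem M j w [:: ((-1)%R, A)] (-1)%R].

Definition EB1_sem (M : pframe R n Omega) (G : {set 'I_n}) (A : set Omega) : set Omega :=
  [set w | forall j, j \in G -> B_sem M j A w].

(* semantics of EB^1_G in the innermost scope: agent-indexed truth sets *)
Definition EB1_in_sem (M : pframe R n Omega) (G : {set 'I_n})
    (T : 'I_n -> set Omega) : 'I_n -> set Omega :=
  fun _ => [set w | forall j, j \in G -> B_sem M j (T j) w].

Fixpoint den_out (Phi : Type) (M : pframe R n Omega) (pi : 'I_n -> Omega -> Phi -> bool)
    (phi : formula n Phi) (i : 'I_n) : set Omega :=
  match phi with
  | Prim p => [set w | pi i w p]
  | Neg psi => ~` den_out M pi psi i
  | And psi chi => den_out M pi psi i `&` den_out M pi chi i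
  | PrLin j ts b =>
      [set w | lin_sem M j w (map (fun t => (t.1, den_out M pi t.2 i)) ts) b]
  | CB G psi =>
      [set w | forall k, (0 < k)%N -> iter k (EB1_sem M G) (den_out M pi psi i) w]
  end.

Fixpoint den_in (Phi : Type) (M : pframe R n Omega) (pi : 'I_n -> Omega -> Phi -> bool)
    (phi : formula n Phi) : 'I_n -> set Omega :=
  match phi with
  | Prim p => fun i => [set w | pi i w p]
  | Neg psi => fun i => ~` den_in M pi psi i
  | And psi chi => fun i => den_in M pi psi i `&` den_in M pi chi i
  | PrLin j ts b => fun _ =>
      [set w | lin_sem M j w (map (fun t => (t.1, den_in M pi t.2 j)) ts) b]
  | CB G psi => fun i =>
      [set w | forall k, (0 < k)%N -> iter k (EB1_in_sem M G) (den_in M pi psi) i w]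
  end.

Fixpoint den_c (P : Type) (M : pframe R n Omega) (pic : Omega -> P -> bool)
    (phi : formula n P) : set Omega :=
  match phi with
  | Prim p => [set w | pic w p]
  | Neg psi => ~` den_c M pic psi
  | And psi chi => den_c M pic psi `&` den_c M pic chi
  | PrLin j ts b =>
      [set w | lin_sem M j w (map (fun t => (t.1, den_c M pic t.2)) ts) b]
  | CB G psi =>
      [set w | forall k, (0 < k)%N -> iter k (EB1_sem M G) (den_c M pic psi) w]
  end.

Definition sat_out (Phi : Type) (M : pframe R n Omega) (pi : 'I_n -> Omega -> Phi -> bool)
  (w : Omega) (i : 'I_n) (phi : formula n Phi) : Prop := den_out M pi phi i w.
Definition sat_in (Phi : Type) (M : pframe R n Omega) (pi : 'I_n -> Omega -> Phi -> bool)
  (w : Omega) (i : 'I_n) (phi : formula n Phi) : Prop := den_in M pi phi i w.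
Definition sat_c (P : Type) (M : pframe R n Omega) (pic : Omega -> P -> bool)
  (w : Omega) (phi : formula n P) : Prop := den_c M pic phi w.

(* the truth assignment of the corresponding common-interpretation structure *)
Definition common_pi (Phi : Type) (pi : 'I_n -> Omega -> Phi -> bool) :
  Omega -> Phi * 'I_n -> bool := fun w pj => pi pj.2 w pj.1.

End Structures.

Fixpoint tr_in n (Phi : Type) (phi : formula n Phi) (i : 'I_n) : formula n (Phi * 'I_n) :=
  match phi with
  | Prim p => Prim (p, i)
  | Neg psi => Neg (tr_in psi i)
  | And psi chi => And (tr_in psi i) (tr_in chi i)
  | PrLin j ts b => PrLin j (map (fun t => (t.1, tr_in t.2 j)) ts) b
  | CB G psi => CB G (bigconj (tr_in psi i) [seq Bf j (tr_in psi j) | j <- enum G])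
  end.

Fixpoint tr_out n (Phi : Type) (phi : formula n Phi) (i : 'I_n) : formula n (Phi * 'I_n) :=
  match phi with
  | Prim p => Prim (p, i)
  | Neg psi => Neg (tr_out psi i)
  | And psi chi => And (tr_out psi i) (tr_out chi i)
  | PrLin j ts b => PrLin j (map (fun t => (t.1, tr_out t.2 i)) ts) b
  | CB G psi => CB G (tr_out psi i)
  end.

(* Main.v *)
Require Import Defs.
From HB Require Import structures.
From mathcomp Require Import all_boot all_order all_algebra.
From mathcomp Require Import boolp classical_sets reals topology normedtype sequences.
Set Implicit Arguments. Unset Strict Implicit. Unset Printing Implicit Defensive.
Import Order.TTheory GRing.Theory Num.Theory numFieldNormedType.Exports.
Local Open Scope classical_set_scope.
Local Open Scope ring_scope.

Lemma prob0 (R : realType) (n : nat) (Omega Phi : Type)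
    (M : pframe R n Omega) (pi : 'I_n -> Omega -> Phi -> bool) :
  is_epist_struct M pi -> forall j w, prob M j w set0 = 0.
Proof.
move=> H j w.
have [Hsub HD Hc Hu] := es_sigma H j w.
have [Hnn H1 Hadd] := es_prob H j w.
have F0 : sfield M j w set0 by have := Hc _ HD; rewrite setDv.
have := Hadd (fun=> set0) (fun=> F0) (@trivIset_set0 nat Omega setT).
rewrite bigcup_const //.
set c := prob M j w set0.
have -> : (fun m => \sum_(k < m) c) = (fun m : nat => c *+ m).
  by apply: funext => m; rewrite sumr_const card_ord.
move=> Hu0.
have Hs : (fun m : nat => c *+ m.+1 - c *+ m) @ \oo --> c - c.
  apply: cvgB => //; by move: Hu0; rewrite -cvg_shiftS.
have Hc' : (fun m : nat => c *+ m.+1 - c *+ m) = fun=> c.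
  by apply: funext => m; rewrite mulrS addrK.
rewrite Hc' subrr in Hs.
have := cvg_cst c (F := \oo); move=> Hcst.
apply: (@cvg_unique _ (@Rhausdorff R) ((fun _ : nat => c) @ \oo)); [exact: Hcst | exact: Hs].

Qed.

Fixpoint formula_ind' n P (Q : formula n P -> Prop)
  (HP : forall p, Q (Prim p)) (HN : forall f, Q f -> Q (Neg f))
  (HA : forall f g, Q f -> Q g -> Q (And f g))
  (HL : forall j ts b, foldr (fun t acc => Q t.2 /\ acc) True ts -> Q (PrLin j ts b))
  (HC : forall G f, Q f -> Q (CB G f)) (phi : formula n P) : Q phi :=
  match phi with
  | Prim p => HP p
  | Neg f => HN f (formula_ind' HP HN HA HL HC f)
  | And f g => HA f g (formula_ind' HP HN HA HL HC f) (formula_ind' HP HN HA HL HC g)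
  | PrLin j ts b => HL j ts b
      ((fix go (ts : seq (rat * formula n P)) : foldr (fun t acc => Q t.2 /\ acc) True ts :=
         match ts with
         | [::] => I
         | (a, f) :: ts' => conj (formula_ind' HP HN HA HL HC f) (go ts')
         end) ts)
  | CB G f => HC G f (formula_ind' HP HN HA HL HC f)
  end.

Section Main.
Variables (R : realType) (n : nat) (Omega Phi : Type)
    (M : pframe R n Omega) (pi : 'I_n -> Omega -> Phi -> bool).
Hypothesis H : is_epist_struct M pi.

Lemma B_ne j X w : B_sem M j X w -> exists w', cell M j w w' /\ X w'.
Proof.
move=> [H1 _]; move: H1; rewrite /lin_sem big_seq1 /= !rmorph1 mul1r => H1.
apply: contrapT => Hn.
have E : X `&` cell M j w = set0.
  apply/seteqP; split => // x [Xx Cx]; apply: Hn; by exists x.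
by move: H1; rewrite E (prob0 H) ler10.
Qed.

Lemma B_cell j X w w' : cell M j w w' -> B_sem M j X w' -> B_sem M j X w.
Proof.
move=> Hc.
have E1 := es_cell_eq H Hc.
have [_ E2] := es_const H Hc.
by rewrite /B_sem /lin_sem /= E1 E2.
Qed.


Lemma den_c_bigconj P (pic : Omega -> P -> bool) d (f : 'I_n -> formula n P) (l : seq 'I_n) :
  l != [::] -> den_c M pic (bigconj d (map f l)) = [set w | forall j, j \in l -> den_c M pic (f j) w].
Proof.
elim: l => [//|x l IH] _.
case: l IH => [|y l] IH.
  apply/seteqP; split => w /=.
    by move=> Hw j; rewrite inE => /eqP ->.
  by apply; rewrite inE.
rewrite [map _ _]/= [bigconj _ _]/= [den_c _ _ (And _ _)]/= IH //.
apply/seteqP; split => w /=.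
  move=> [Hx Hl] j; rewrite inE => /orP [/eqP -> //|]; exact: Hl.
move=> Hw; split; first by apply: Hw; rewrite inE eqxx.
by move=> k Hk; apply: Hw; rewrite inE Hk orbT.
Qed.

Definition Pmain (phi : formula n Phi) :=
  (forall i, den_in M pi phi i = den_c M (common_pi pi) (tr_in phi i)) /\
  (forall i, den_out M pi phi i = den_c M (common_pi pi) (tr_out phi i)).

Lemma iter_in G (T : 'I_n -> set Omega) k :
  iter k.+1 (EB1_in_sem M G) T =
  fun _ => iter k (EB1_sem M G) [set w | forall j, j \in G -> B_sem M j (T j) w].
Proof. by elim: k => [//|k IH]; rewrite iterS IH. Qed.

Lemma main phi : wf phi -> Pmain phi.
Proof.
elim/formula_ind': phi.
- by move=> p _; split.
- move=> f IH /IH [H1 H2]; split => i /=; by rewrite ?H1 ?H2.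
- move=> f g IHf IHg [/IHf [H1 H2] /IHg [H3 H4]]; split => i /=; by rewrite ?H1 ?H2 ?H3 ?H4.
- move=> j ts b IHs Hwf.
  have E : (forall i, map (fun t => (t.1, den_in M pi t.2 i)) ts =
              map (fun t => (t.1, den_c M (common_pi pi) (tr_in t.2 i))) ts) /\
           (forall i, map (fun t => (t.1, den_out M pi t.2 i)) ts =
              map (fun t => (t.1, den_c M (common_pi pi) (tr_out t.2 i))) ts).
    elim: ts IHs Hwf => [|[a f] ts IH] //= [IHf IHs] [Wf Wfs].
    have [H1 H2] := IHf Wf; have [H3 H4] := IH IHs Wfs.
    by split => i; rewrite ?H1 ?H2 ?H3 ?H4.
  have [E1 E2] := E.
  split => i /=; rewrite -map_comp /comp /=; by rewrite ?E1 ?E2.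
- move=> G f IH [HG /IH [H1 H2]]; split => i /=; last by rewrite H2.
  have EC : den_c M (common_pi pi)
      (bigconj (tr_in f i) [seq Bf j (tr_in f j) | j <- enum G]) =
      [set w | forall j, j \in G -> B_sem M j (den_in M pi f j) w].
    rewrite den_c_bigconj; last by rewrite -size_eq0 -cardE -lt0n.
    apply/seteqP; split => w /= Hw j Hj.
      rewrite H1; have := Hw j; rewrite mem_enum => /(_ Hj); exact.
    have := Hw j; rewrite -mem_enum => /(_ Hj); rewrite H1; exact.
  rewrite EC; apply/seteqP; split => w /=.
    by move=> Hw k _; have := Hw k.+1 erefl; rewrite iter_in.
  move=> Hw [//|k] _; rewrite iter_in.
  case: k => [|k]; last exact: Hw.
  move=> /= j Hj.
  have [w' [Hc Hw']] := B_ne (Hw 1%N erefl j Hj).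
  apply: (B_cell Hc); exact: Hw' j Hj.
Qed.

End Main.

Theorem theorem2 (R : realType) (n : nat) (Omega Phi : Type)
    (M : pframe R n Omega) (pi : 'I_n -> Omega -> Phi -> bool) :
  is_epist_struct M pi ->
  forall (phi : formula n Phi) (w : Omega) (i : 'I_n), wf phi ->
    (sat_in M pi w i phi <-> sat_c M (common_pi pi) w (tr_in phi i)) /\
    (sat_out M pi w i phi <-> sat_c M (common_pi pi) w (tr_out phi i)).
Proof.
move=> H phi w i Hwf; have [H1 H2] := main H Hwf.
by rewrite /sat_in /sat_out /sat_c H1 H2.
Qed.
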